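(* Let $S$ be a finite set of agents, $p>0$ a price and $k$ a positive integer. Let $(x,\tilde x)$ be the pair returned by $\mathrm{Indiv\_Alloc}(S,p,k)$ and let $x'$ be the allocation returned by $\mathrm{Div\_Alloc}(S,p,k)$. Then $$\mathbb{E}\Big[\sum_{i\in S}\tilde x_i\Big]\ \ge\ \frac12\sum_{i\in S} x'_i,$$ where the expectation is over the internal randomness of $\mathrm{Indiv\_Alloc}$ (and, if relevant, of $\mathrm{Div\_Alloc}$).
   Context: Each agent $i$ has a value $v_i\ge 0$ and a budget $b_i\ge 0$. The procedure $\mathrm{Div\_Alloc}(S,p,k)$: set $k'\gets k$, $x_i\gets 0$ for all $i\in S$; draw a uniformly random permutation $\pi$ of $S$; for $t=1,\dots,|S|$, if $v_{\pi(t)}\ge p$ set $x_{\pi(t)}\gets\min\{b_{\pi(t)}/p,k'\}$ and $k'\gets k'-x_{\pi(t)}$; return $x$. (Note $\sum_i x_i=\min\{\sum_{i\in S: v_i\ge p} b_i/p,\ k\}$.) The procedure $\mathrm{Indiv\_Alloc}(S,p,k)$: draw a uniformly random permutation $\pi$ of $S$; set $k'\gets k$, $x_i\gets 0$, $\tilde x_i\gets 0$ for all $i\in S$; for $t=1,\dots,|S|$, with $i=\pi(t)$: if $v_i\ge p$, then (a) if $k'\le b_i/p$, set $x_i\gets k'$ and $\tilde x_i\gets k'$; (b) otherwise set $\tilde x_i\gets b_i/p$ and set $x_i\gets\lceil b_i/p\rceil$ with probability $b_i/p-\lfloor b_i/p\rfloor$ and $x_i\gets\lfloor b_i/p\rfloor$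 otherwise (independently of everything else); then set $k'\gets k'-x_i$. Return $(x,\tilde x)$. Here $x$ is the (integral) allocation and $\tilde x$ is the quantity the agent is charged for. *)

(* Defs.v *)
From HB Require Import structures.
From mathcomp Require Import all_boot all_order all_algebra all_fingroup.
Set Implicit Arguments. Unset Strict Implicit. Unset Printing Implicit Defensive.
Import Order.TTheory GRing.Theory Num.Theory.
Local Open Scope ring_scope.

(* Agents are S = 'I_n, with values v and budgets b.  A random permutation is
   an element of 'S_n (uniform: averaged with weight 1/n!).  The t-th agent
   processed is pi t, t = 0..n-1. *)

Section Alloc.
Variables (R : archiRealFieldType) (n : nat) (v b : 'I_n -> R) (p : R).

Definition div_step (st : R * {ffun 'I_n -> R}) (i : 'I_n) :=
  let: (k', x) := st in
  if p <= v i then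
    let xi := Num.min (b i / p) k' in
    (k' - xi, [ffun j => if j == i then xi else x j])
  else (k', x).

Definition div_alloc (k : nat) (pi : 'S_n) : {ffun 'I_n -> R} :=
  (foldl div_step (k%:R, [ffun => 0]) [seq pi t | t <- enum 'I_n]).2.

(* Indiv_Alloc: the rounding coins are c : {ffun 'I_n -> bool} (one
   independent coin per agent; c i = true means "round up").
   state = (k', x, xt). *)
Definition indiv_step (c : {ffun 'I_n -> bool})
    (st : R * {ffun 'I_n -> R} * {ffun 'I_n -> R}) (i : 'I_n) :=
  let: (k', x, xt) := st in
  if p <= v i then
    if k' <= b i / p then
      (k' - k', [ffun j => if j == i then k' else x j],
                [ffun j => if j == i then k' else xt j])
    else
      let q := b i / p in
      let xi : R := if c i then (Num.ceil q)%:~R else (Num.floor q)%:~R in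
      (k' - xi, [ffun j => if j == i then xi else x j],
                [ffun j => if j == i then q else xt j])
  else (k', x, xt).

Definition indiv_alloc (k : nat) (pi : 'S_n) (c : {ffun 'I_n -> bool}) :=
  let: (_, x, xt) :=
    foldl (indiv_step c) (k%:R, [ffun => 0], [ffun => 0])
          [seq pi t | t <- enum 'I_n] in (x, xt).

Definition coin_prob (c : {ffun 'I_n -> bool}) : R :=
  \prod_(i < n) (let fr := b i / p - (Num.floor (b i / p))%:~R in
                 if c i then fr else 1 - fr).

Definition E_indiv_charged (k : nat) : R :=
  (n`!%:R)^-1 * \sum_(pi : 'S_n) \sum_(c : {ffun 'I_n -> bool})
     coin_prob c * \sum_(i < n) (indiv_alloc k pi c).2 i.

(* E[ sum_i x'_i ] over uniform permutation (deterministic in fact). *)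
Definition E_div_total (k : nat) : R :=
  (n`!%:R)^-1 * \sum_(pi : 'S_n) \sum_(i < n) div_alloc k pi i.

End Alloc.

(* Main.v *)
Require Import Defs.
From HB Require Import structures.
From mathcomp Require Import all_boot all_order all_algebra all_fingroup.
From mathcomp Require Import ring lra.
Import Order.TTheory GRing.Theory Num.Theory.
Local Open Scope ring_scope.

Section Proof.
Variables (R : archiRealFieldType) (n : nat) (v b : 'I_n -> R) (p : R).
Hypothesis hb : forall i, 0 <= b i.
Hypothesis hp : 0 < p.

Definition q i := b i / p.
Lemma q_ge0 i : 0 <= q i.
Proof. by rewrite /q divr_ge0 // ltW. Qed.

Definition fr i := q i - (Num.floor (q i))%:~R.
Definition wi i (bb : bool) := if bb then fr i else 1 - fr i.
Definition xi (c : {ffun 'I_n -> bool}) i : R :=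
  if c i then (Num.ceil (q i))%:~R else (Num.floor (q i))%:~R.

Fixpoint charged (s : seq 'I_n) (K : R) c : R :=
  match s with
  | [::] => 0
  | i :: s' => if p <= v i then
                 if K <= q i then K + charged s' (K - K) c
                 else q i + charged s' (K - xi c i) c
               else charged s' K c
  end.

Fixpoint Dz (s : seq 'I_n) (K : R) c : R :=
  match s with
  | [::] => 0
  | i :: s' => if p <= v i then
                 if K <= q i then Dz s' (K - K) c
                 else (q i - xi c i) + Dz s' (K - xi c i) c
               else Dz s' K c
  end.

Definition Bs (s : seq 'I_n) : R := \sum_(i <- s | p <= v i) q i.

Lemma Bs_ge0 s : 0 <= Bs s.
Proof. by apply: sumr_ge0 => i _; apply: q_ge0. Qed.

Lemma sum_upd (f : {ffun 'I_n -> R}) i w :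
  \sum_j [ffun j => if j == i then w else f j] j = w + \sum_j f j - f i.
Proof.
rewrite (bigD1 i) //= [in RHS](bigD1 i) //= ffunE eqxx.
rewrite (eq_bigr (fun j => f j)); last by move=> j /negbTE ji; rewrite ffunE ji.
by rewrite addrA addrAC addrK.
Qed.

Lemma fold_indiv c (s : seq 'I_n) (st : R * {ffun 'I_n -> R} * {ffun 'I_n -> R}) :
  uniq s -> (forall j, j \in s -> st.2 j = 0) ->
  \sum_j (foldl (indiv_step v b p c) st s).2 j = \sum_j st.2 j + charged s st.1.1 c.
Proof.
elim: s st => [|i s IH] [[K x] xt] /=; first by rewrite addr0.
move=> /andP[ni us] H0.
have Hi : xt i = 0 by apply: (H0 i); rewrite inE eqxx.
have H0' : forall j, j \in s -> xt j = 0 by move=> j js; apply: H0; rewrite inE js orbT.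
have Hn : forall w j, j \in s -> [ffun j => if j == i then w else xt j] j = 0.
  move=> w j js; rewrite ffunE; case: eqP => [ji|_]; last exact: H0'; rewrite ji in js.
  by rewrite js in ni.
rewrite /indiv_step -/(q i); case: ifP => hv; last by rewrite IH.
case: ifP => hK; rewrite IH //= ?sum_upd ?Hi ?subr0 -/(xi c i);
  try lra; move=> j js; exact: Hn.
Qed.

Lemma min_cases (x y : R) :
  (x <= y /\ Num.min x y = x) \/ (y < x /\ Num.min x y = y).
Proof. rewrite minEle; case: leP => h; [left|right]; done. Qed.

Lemma min_add (a B K : R) : 0 <= a -> 0 <= B ->
  Num.min a K + Num.min B (K - Num.min a K) = Num.min (a + B) K.
Proof.
move=> ha hB; rewrite !minEle.
case: ifP => h1; case: ifP => h2; case: ifP => h3; try lra.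
Qed.

Lemma fold_div (s : seq 'I_n) (st : R * {ffun 'I_n -> R}) :
  uniq s -> (forall j, j \in s -> st.2 j = 0) -> 0 <= st.1 ->
  \sum_j (foldl (div_step v b p) st s).2 j = \sum_j st.2 j + Num.min (Bs s) st.1.
Proof.
elim: s st => [|i s IH] [K x] /=.
  by move=> _ _ hK; rewrite /Bs big_nil minEle; case: ifP => h; lra.
move=> /andP[ni us] H0 hK.
have Hi : x i = 0 by apply: (H0 i); rewrite inE eqxx.
have H0' : forall j, j \in s -> x j = 0 by move=> j js; apply: H0; rewrite inE js orbT.
have Hn : forall w j, j \in s -> [ffun j => if j == i then w else x j] j = 0.
  move=> w j js; rewrite ffunE; case: eqP => [ji|_]; last exact: H0'; rewrite ji in js.
  by rewrite js in ni.
rewrite /div_step -/(q i) /Bs big_cons -/(Bs s); case: ifP => hv; last first.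
  by rewrite IH.
rewrite IH //=; last first.
- by rewrite minEle; case: ifP => h; lra.
- by move=> j js; exact: Hn.
rewrite sum_upd Hi subr0 -min_add ?q_ge0 ?Bs_ge0 //; lra.
Qed.

Lemma xi_int c {i} {z : int} : ~~ (z%:~R <= q i) ->
  exists r : int, [/\ 0 <= r, r <= z & xi c i = r%:~R].
Proof.
move=> hz.
have hc : Num.ceil (q i) <= z by rewrite ceil_le_int ltW // ltNge.
have hf0 : 0 <= Num.floor (q i) by rewrite floor_ge0 q_ge0.
have hfc : Num.floor (q i) <= Num.ceil (q i) by rewrite ceil_floor lerDl.
rewrite /xi; case: (c i).
- by exists (Num.ceil (q i)); split => //; apply: le_trans hfc.
- by exists (Num.floor (q i)); split => //; apply: le_trans hc.
Qed.

Lemma charged_ge (s : seq 'I_n) c (z : int) : 0 <= z ->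
  Num.min (Bs s) z%:~R / 2 + Dz s z%:~R c / 2 <= charged s z%:~R c.
Proof.
elim: s z => [|i s IH] z hz /=.
  have hz' : (0 : R) <= z%:~R by rewrite ler0z.
  rewrite /Bs big_nil; case: (min_cases 0 z%:~R) => [[h ->]|[h ->]]; lra.
rewrite /Bs big_cons -/(Bs s); case: ifP => hv; last exact: IH.
have hq := q_ge0 i; have hB := Bs_ge0 s.
have hz' : (0 : R) <= z%:~R by rewrite ler0z.
case: ifP => hK.
  have := IH 0 (lexx _); rewrite mulr0z => IH0.
  move: IH0; case: (min_cases (Bs s) 0) => [[h0 ->]|[h0 ->]] => IH0;
  rewrite subrr; case: (min_cases (q i + Bs s) z%:~R) => [[h ->]|[h ->]]; lra.
have [r [hr0 hrz ->]] := xi_int c (negbT hK).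
have hr : (0 : R) <= r%:~R by rewrite ler0z.
have := IH (z - r); rewrite subr_ge0 => /(_ hrz); rewrite intrB => IHr.
move/negbT: hK; rewrite -ltNge => hK.
move: IHr; case: (min_cases (q i + Bs s) z%:~R) => [[h1 ->]|[h1 ->]];
  case: (min_cases (Bs s) (z%:~R - r%:~R)) => [[h2 ->]|[h2 ->]]; move=> IHr; lra.
Qed.

Definition flip (i : 'I_n) (c : {ffun 'I_n -> bool}) : {ffun 'I_n -> bool} :=
  [ffun l => if l == i then ~~ c l else c l].

Lemma flip_inv i : involutive (flip i).
Proof.
move=> c; apply/ffunP => j; rewrite !ffunE; case: (j == i) => //=; by rewrite negbK.
Qed.

Lemma flip_i i c : flip i c i = ~~ c i.
Proof. by rewrite ffunE eqxx. Qed.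

Lemma flip_j i j c : j != i -> flip i c j = c j.
Proof. by move=> /negbTE ji; rewrite ffunE ji. Qed.

Lemma coin_probE c : coin_prob b p c = \prod_(j < n) wi j (c j).
Proof. by []. Qed.

Lemma coin_split i (h : {ffun 'I_n -> bool} -> R) (phi : bool -> R) :
  (forall c, h (flip i c) = h c) ->
  \sum_(c : {ffun 'I_n -> bool}) coin_prob b p c * (h c * phi (c i)) =
  (wi i true * phi true + wi i false * phi false) * \sum_(c : {ffun 'I_n -> bool}) coin_prob b p c * h c.
Proof.
move=> hf.
pose Rr c := \prod_(j < n | j != i) wi j (c j).
have cp c : coin_prob b p c = wi i (c i) * Rr c by rewrite coin_probE (bigD1 i).
have Rf c : Rr (flip i c) = Rr c by apply: eq_bigr => j ji; rewrite flip_j.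
have split (G : {ffun 'I_n -> bool} -> R) :
    \sum_(c : {ffun 'I_n -> bool}) G c = \sum_(c : {ffun 'I_n -> bool} | c i) (G c + G (flip i c)).
  rewrite (bigID (fun c : {ffun 'I_n -> bool} => c i)) /= big_split /=; congr (_ + _).
  rewrite (reindex_inj (inv_inj (flip_inv i))) /=.
  by apply: eq_bigl => c; rewrite flip_i negbK.
have w1 : wi i false = 1 - wi i true by [].
rewrite split [X in _ = _ * X]split mulr_sumr; apply: eq_bigr => c ci.
rewrite !cp Rf hf flip_i ci /=; ring.
Qed.

Definition inv_on (h : {ffun 'I_n -> bool} -> R) (s : seq 'I_n) :=
  forall j, j \in s -> forall c, h (flip j c) = h c.

Lemma coef0 i : wi i true * (q i - (Num.ceil (q i))%:~R) +
  wi i false * (q i - (Num.floor (q i))%:~R) = 0.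
Proof.
rewrite /wi /fr ceil_floor intrD.
case: (boolP (q i \is a Num.int)) => hint /=.
  move: hint; rewrite intrEfloor => /eqP ->; rewrite addr0; ring.
ring.
Qed.

Lemma Dz_zero (s : seq 'I_n) : uniq s -> forall K h, inv_on h s ->
  \sum_(c : {ffun 'I_n -> bool}) coin_prob b p c * (h c * Dz s K c) = 0.
Proof.
elim: s => [|i s IH].
  by move=> _ K h _; apply: big1 => c _; rewrite /= mulr0 mulr0.
move=> /andP[ni us] K h hinv.
have hinv' : inv_on h s by move=> j js; apply: hinv; rewrite inE js orbT.
case hv: (p <= v i).
  2: by apply: etrans (IH us K h hinv'); apply: eq_bigr => c _; rewrite /= hv.
case hK: (K <= q i).
  by apply: etrans (IH us (K - K) h hinv'); apply: eq_bigr => c _; rewrite /= hv hK.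
pose phi (bb : bool) := q i - (if bb then (Num.ceil (q i))%:~R else (Num.floor (q i))%:~R).
pose h1 c := h c * (c i)%:R.
pose h0 c := h c * (~~ c i)%:R.
have hinvb (bb : bool) : inv_on (fun c => h c * (if bb then c i else ~~ c i)%:R) s.
  move=> j js c; rewrite hinv' // flip_j //.
  by apply/eqP => ij; move: js; rewrite -ij => js; rewrite js in ni.
transitivity (\sum_(c : {ffun 'I_n -> bool}) (coin_prob b p c * (h c * phi (c i)) +
   (coin_prob b p c * ((h c * (c i)%:R) * Dz s (K - (Num.ceil (q i))%:~R) c) +
    coin_prob b p c * ((h c * (~~ c i)%:R) * Dz s (K - (Num.floor (q i))%:~R) c)))).
  apply: eq_bigr => c _; rewrite /= hv hK /phi /xi; case: (c i) => /=; ring.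
rewrite big_split big_split /= (IH us _ _ (hinvb true)) (IH us _ _ (hinvb false)).
rewrite coin_split; last by move=> c; apply: hinv; rewrite inE eqxx.
by rewrite /phi /= coef0 mul0r !addr0.
Qed.
Lemma wi_ge0 j bb : 0 <= wi j bb.
Proof.
have /andP[h1 h2] := floor_itv (q j).
rewrite /wi /fr; case: bb; rewrite intrD in h2; lra.
Qed.
End Proof.

Theorem lemma1 (R : archiRealFieldType) (n : nat) (v b : 'I_n -> R) (p : R)
  (k : nat) (hv : forall i, 0 <= v i) (hb : forall i, 0 <= b i)
  (hp : 0 < p) (hk : (0 < k)%N) :
  E_indiv_charged v b p k >= 2^-1 * E_div_total v b p k.
Proof.
rewrite /E_indiv_charged /E_div_total [leLHS]mulrCA.
have hf : (0 : R) <= (n`!%:R)^-1 by rewrite invr_ge0 ler0n.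
apply: ler_wpM2l => //; rewrite mulr_sumr; apply: ler_sum => pi _.
set sq := [seq pi t | t <- enum 'I_n].
have us : uniq sq by rewrite map_inj_uniq ?enum_uniq //; apply: perm_inj.
have hk0 : (0 : R) <= k%:R by rewrite ler0n.
rewrite /div_alloc (fold_div _ _ v b p hb hp) //=; last by move=> j _; rewrite ffunE.
rewrite big1 ?add0r; last by move=> j _; rewrite ffunE.
rewrite -/sq.
have Ec : forall c, \sum_i (indiv_alloc v b p k pi c).2 i = charged _ _ v b p sq k%:R c.
  move=> c.
  have -> : (indiv_alloc v b p k pi c).2 =
      (foldl (indiv_step v b p c) (k%:R, [ffun => 0], [ffun => 0]) sq).2.
    by rewrite /indiv_alloc; case: foldl => [[? ?] ?].
  rewrite (fold_indiv _ _ v b p c _ _ us) //=; last by move=> j _; rewrite ffunE.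
  by rewrite big1 ?add0r // => j _; rewrite ffunE.
have W1 : \sum_(c : {ffun 'I_n -> bool}) coin_prob b p c = 1.
  rewrite (eq_bigr (fun c : {ffun 'I_n -> bool} => \prod_j wi _ _ b p j (c j))); last by move=> cc _; exact: coin_probE.
  rewrite -(bigA_distr_bigA (fun j bb => wi _ _ b p j bb)) /=.
  by apply: big1 => j _; rewrite big_bool /wi /=; ring.
have Z := Dz_zero _ _ v b p sq us k%:R (fun _ => 1) (fun j _ c => erefl).
have -> : 2^-1 * Num.min (Bs _ _ v b p sq) k%:R = \sum_c coin_prob b p c *
   (Num.min (Bs _ _ v b p sq) k%:R / 2 + Dz _ _ v b p sq k%:R c / 2).
  apply/esym.
  rewrite (eq_bigr (fun c => coin_prob b p c * (Num.min (Bs _ _ v b p sq) k%:R / 2) +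
             coin_prob b p c * (1 * Dz _ _ v b p sq k%:R c) / 2)); last first.
    by move=> c _; ring.
  rewrite big_split /= -mulr_suml W1 -mulr_suml Z; ring.
apply: ler_sum => c _; rewrite Ec; apply: ler_wpM2l.
  by rewrite (coin_probE _ _ b p); apply: prodr_ge0 => j _; apply: wi_ge0.
exact: (charged_ge _ _ v b p hb hp sq c k%:Z).
Qed.
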